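(* (i) Let $\theta\in[0,2\pi]$. If $\lambda_\infty>\|V\|_\infty$, then for no $s\in(0,L]$ is $\lambda_\infty$ an eigenvalue of $H_{\theta,s}$; in particular $\Gamma_2$ has no crossings with $\operatorname{Train}(X\times X)$ and $B_2=0$ (for any $s_0\in(0,L)$). (ii) Let $\theta\in(0,2\pi)$. If $\lambda_\infty>\|V\|_\infty$ and $0<s_0<\frac12\min\{\theta,2\pi-\theta\}\,(\|V\|_\infty+\lambda_\infty)^{-1/2}$, then no $\lambda\in[0,\lambda_\infty]$ is an eigenvalue of $H_{\theta,s_0}$; in particular $\Gamma_1$ has no crossings and $B_1=0$.
   Context: $n\ge1$, $L>0$; $V:\mathbb{R}\to\mathbb{R}^{n\times n}$ symmetric, with real piecewise continuous $2L$-periodic entries; $\|V\|_\infty=\sup_{x\in[-L,L]}\|V(x)\|$. For $\theta\in[0,2\pi]$, $s\in(0,L]$, $H_{\theta,s}$ is $y\mapsto y''+V(x)y$ in $L^2([-s,s];\mathbb{C}^n)$ with domain $\{y: y,y'\in AC,\ y''\in L^2,\ y(s)=e^{i\theta}y(-s),\ y'(s)=e^{i\theta}y'(-s)\}$. Notation: $\otimes$ Kronecker product, $\oplus$ block-diagonal sum, $J=\begin{pmatrix}0&1\\-1&0\end{pmatrix}$. $A(x,\lambda)=\begin{pmatrix}0_{2n}&I_{2n}\\ \lambda I_{2n}-V(x)\otimes I_2&0_{2n}\end{pmatrix}$, $\mathfrak{u}(s,\theta)=\begin{pmatrix}0&-\theta/(2s)\\ \theta/(2s)&0\end{pmatrix}$,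 $B(s,\theta)=I_{2n}\otimes\mathfrak{u}(s,\theta)$. $Y_{s,\lambda}$: absolutely continuous solutions on $[-L,L]$ of $\mathbf{p}'=A(x,\lambda)\mathbf{p}$, $\mathbf{w}'=B(s,\theta)\mathbf{w}$ ($\mathbf{p},\mathbf{w}\in\mathbb{R}^{4n}$), no boundary conditions. $\Phi_s^\lambda(\mathbf{p},\mathbf{w})=(\mathbf{p}(-s),\mathbf{w}(-s),\mathbf{p}(s),\mathbf{w}(s))^\top$. $\omega(v_1,v_2)=\langle v_1,\Omega v_2\rangle$, $\Omega=(J\otimes I_{2n})\oplus(J^\top\otimes I_{2n})\oplus(J^\top\otimes I_{2n})\oplus(J\otimes I_{2n})$. $X=\{(p,q,w,z)\in\mathbb{R}^{8n}: p=w, q=z\}$. A crossing of a path $t\mapsto\Phi(t)$ of Lagrangian planes is a parameter value $t_0$ with $\Phi(t_0)\cap(X\times X)\neq\{0\}$; the crossing form $Q$ on $\Phi(t_0)\cap(X\times X)$ is $Q(v,v)=\frac{d}{dt}\omega(v,\phi(t)v)|_{t_0}$ where $\Phi(t)$ is the graph of $\phi(t):\Phi(t_0)\to W$, $W$ a fixed complement. Curves for $s_0\in(0,L)$, $\lambda_\infty>0$: $\Gamma_1:\lambda\mapsto\Phi_{s_0}^\lambda(Y_{s_0,\lambda})$, $\lambda\in[0,\lambda_\infty]$; $\Gamma_2:s\mapsto\Phi_s^{\lambda_\infty}(Y_{s,\lambda_\infty})$, $s\in[s_0,L]$. For a path $\Gamma_i$ on $[a_i,b_i]$, $B_i=|\tfrac12\operatorname{sign}Q(a_i)|+\sum_{a_i<t<b_i}|\operatorname{sign}Q(t)|+|\tfrac12\operatorname{sign}Q(b_i)|$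 (number of crossings counted with multiplicity, regardless of sign). *)

(* Defs.v *)
From Stdlib Require Import Reals Lra Lia List.
Open Scope R_scope.

Fixpoint rsum (f : nat -> R) (m : nat) : R :=
  match m with O => 0 | S m' => rsum f m' + f m' end.

(** Vectors of R^d are functions nat -> R (only indices < d matter);
    matrices are functions nat -> nat -> R.  A matrix-valued function
    V : R -> R^{n x n} is given as  V : nat -> nat -> R -> R, entry (i,j) at x. *)

Definition is_opnorm (n : nat) (M : nat -> nat -> R) (r : R) : Prop :=
  is_lub (fun t => exists v : nat -> R,
             rsum (fun j => v j ^ 2) n <= 1 /\
             t = sqrt (rsum (fun i => (rsum (fun j => M i j * v j) n) ^ 2) n)) r.

Definition is_Vsupnorm (n : nat) (L : R) (V : nat -> nat -> R -> R) (N : R) : Prop :=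
  is_lub (fun t => exists x, -L <= x <= L /\ is_opnorm n (fun i j => V i j x) t) N.

Definition piecewise_continuous (f : R -> R) : Prop :=
  forall a b : R, exists l : list R,
    (forall x, a <= x <= b -> ~ In x l -> continuity_pt f x) /\
    (forall x, In x l ->
       (exists r, limit1_in f (fun y => x < y) r x) /\
       (exists r, limit1_in f (fun y => y < x) r x)).

Definition cont_on (f : R -> R) (a b : R) : Prop :=
  forall x, a <= x <= b -> limit1_in f (fun y => a <= y <= b) (f x) x.

(** p : [a,b] -> R^d is an (absolutely continuous) solution of p' = F(x,p):
    continuous on [a,b] and satisfying the equation at every point of (a,b)
    outside a finite exceptional set. *)
Definition ac_sol (d : nat) (a b : R) (F : R -> (nat -> R) -> (nat -> R))
    (p : R -> nat -> R) : Prop :=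
  (forall k, (k < d)%nat -> cont_on (fun t => p t k) a b) /\
  exists E : list R, forall x, a < x < b -> ~ In x E ->
    forall k, (k < d)%nat -> derivable_pt_lim (fun t => p t k) x (F x (p x) k).

(** (V(x) (x) I_2) u, for u in R^{2n}; index 2i+a  <->  (i,a). *)
Definition VI2 (n : nat) (V : nat -> nat -> R -> R) (x : R) (u : nat -> R) : nat -> R :=
  fun k => rsum (fun j => V (k / 2)%nat j x * u (2 * j + k mod 2)%nat) n.

Definition A_apply (n : nat) (V : nat -> nat -> R -> R) (lam x : R) (p : nat -> R) : nat -> R :=
  fun k => if (k <? 2 * n)%nat then p (k + 2 * n)%nat
           else lam * p (k - 2 * n)%nat - VI2 n V x p (k - 2 * n)%nat.

(** B(s,theta) w = (I_{2n} (x) u(s,theta)) w for w in R^{4n},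
    u = [[0, -theta/(2s)], [theta/(2s), 0]]. *)
Definition B_apply (s theta : R) (w : nat -> R) : nat -> R :=
  fun k => if Nat.even k then - (theta / (2 * s)) * w (S k)
           else (theta / (2 * s)) * w (pred k).

Definition inY (n : nat) (V : nat -> nat -> R -> R) (L theta s lam : R)
    (p w : R -> nat -> R) : Prop :=
  ac_sol (4 * n) (- L) L (fun x v => A_apply n V lam x v) p /\
  ac_sol (4 * n) (- L) L (fun _ v => B_apply s theta v) w.

Definition Phi (n : nat) (s : R) (p w : R -> nat -> R) : nat -> R :=
  fun k => if (k <? 4 * n)%nat then p (- s) k
           else if (k <? 8 * n)%nat then w (- s) (k - 4 * n)%nat
           else if (k <? 12 * n)%nat then p s (k - 8 * n)%nat
           else w s (k - 12 * n)%nat.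

(** X = {(p,q,w,z) in R^{8n} : p = w, q = z}, blocks of size 2n. *)
Definition inX (n : nat) (v : nat -> R) : Prop :=
  forall k, (k < 2 * n)%nat ->
    v k = v (k + 4 * n)%nat /\ v (k + 2 * n)%nat = v (k + 6 * n)%nat.

Definition inXX (n : nat) (v : nat -> R) : Prop :=
  inX n v /\ inX n (fun k => v (k + 8 * n)%nat).

Definition is_crossing (n : nat) (V : nat -> nat -> R -> R) (L theta s lam : R) : Prop :=
  exists p w : R -> nat -> R,
    inY n V L theta s lam p w /\ inXX n (Phi n s p w) /\
    exists k, (k < 16 * n)%nat /\ Phi n s p w k <> 0.

(** lambda is an eigenvalue of H_{theta,s}: there is a nonzero y : [-s,s] -> C^n
    (realified: y k, index 2i = Re y_i, 2i+1 = Im y_i) with y, y' absolutely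
    continuous, y'' + V y = lambda y, y(s) = e^{i theta} y(-s),
    y'(s) = e^{i theta} y'(-s).  dy plays the role of y'. *)
Definition rot_bc (n : nat) (theta : R) (a b : nat -> R) : Prop :=
  forall i, (i < n)%nat ->
    b (2 * i)%nat = cos theta * a (2 * i)%nat - sin theta * a (2 * i + 1)%nat /\
    b (2 * i + 1)%nat = sin theta * a (2 * i)%nat + cos theta * a (2 * i + 1)%nat.

Definition is_eigenvalue (n : nat) (V : nat -> nat -> R -> R) (theta s lam : R) : Prop :=
  exists y dy : R -> nat -> R,
    (forall k, (k < 2 * n)%nat ->
       cont_on (fun t => y t k) (- s) s /\ cont_on (fun t => dy t k) (- s) s) /\
    (exists E : list R, forall x, - s < x < s -> ~ In x E ->
       forall k, (k < 2 * n)%nat ->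
         derivable_pt_lim (fun t => y t k) x (dy x k) /\
         derivable_pt_lim (fun t => dy t k) x (lam * y x k - VI2 n V x (y x) k)) /\
    rot_bc n theta (y (- s)) (y s) /\
    rot_bc n theta (dy (- s)) (dy s) /\
    (exists x k, - s <= x <= s /\ (k < 2 * n)%nat /\ y x k <> 0).

(* Main.v *)
Require Import Defs.
From Stdlib Require Import Reals Lra Lia List.
From Coquelicot Require Import Coquelicot.
Open Scope R_scope.

Lemma rsum_ext f g m : (forall k, (k < m)%nat -> f k = g k) -> rsum f m = rsum g m.
Proof. induction m; simpl; intros H; auto. rewrite IHm by (intros; apply H; lia). rewrite H by lia; auto. Qed.

Lemma rsum_plus f g m : rsum (fun k => f k + g k) m = rsum f m + rsum g m.
Proof. induction m; simpl; [lra|]. rewrite IHm; lra. Qed.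

Lemma rsum_minus f g m : rsum (fun k => f k - g k) m = rsum f m - rsum g m.
Proof. induction m; simpl; [lra|]. rewrite IHm; lra. Qed.

Lemma rsum_scal c f m : rsum (fun k => c * f k) m = c * rsum f m.
Proof. induction m; simpl; [lra|]. rewrite IHm; lra. Qed.

Lemma rsum_le f g m : (forall k, (k < m)%nat -> f k <= g k) -> rsum f m <= rsum g m.
Proof. induction m; simpl; intros H; [lra|]. assert (H1 := H m ltac:(lia)). assert (rsum f m <= rsum g m) by (apply IHm; intros; apply H; lia). lra. Qed.

Lemma rsum_nonneg f m : (forall k, (k < m)%nat -> 0 <= f k) -> 0 <= rsum f m.
Proof. intros H. replace 0 with (rsum (fun _ => 0) m). apply rsum_le; auto.
 induction m; simpl; auto. rewrite IHm; [lra|intros; apply H; lia]. Qed.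

Lemma rsum_zero m : rsum (fun _ => 0) m = 0.
Proof. induction m; simpl; auto; rewrite IHm; lra. Qed.

Lemma rsum_pairs f m : rsum f (2 * m) = rsum (fun i => f (2 * i)%nat + f (2 * i + 1)%nat) m.
Proof. induction m; [simpl; auto|]. replace (2 * S m)%nat with (S (S (2*m))) by lia.
 change (rsum f (S (S (2*m)))) with (rsum f (2*m) + f (2*m)%nat + f (S (2*m))).
 change (rsum (fun i => f (2 * i)%nat + f (2 * i + 1)%nat) (S m)) with
   (rsum (fun i => f (2 * i)%nat + f (2 * i + 1)%nat) m + (f (2 * m)%nat + f (2 * m + 1)%nat)).
 rewrite IHm. replace (2*m+1)%nat with (S (2*m)) by lia. lra. Qed.

Lemma term_le_rsum f m k : (forall j, (j < m)%nat -> 0 <= f j) -> (k < m)%nat -> f k <= rsum f m.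
Proof. induction m; simpl; intros H Hk; [lia|].
 destruct (Nat.eq_dec k m) as [->|Hne].
 - assert (0 <= rsum f m) by (apply rsum_nonneg; intros; apply H; lia). lra.
 - assert (f k <= rsum f m) by (apply IHm; [intros; apply H; lia|lia]). assert (0 <= f m) by (apply H; lia). lra. Qed.

Lemma rsum_sq_zero f m : rsum (fun k => f k ^ 2) m = 0 -> forall k, (k < m)%nat -> f k = 0.
Proof. intros H k Hk. assert (f k ^ 2 <= rsum (fun k => f k ^ 2) m) by (apply (term_le_rsum (fun k => f k ^2)); [intros; nra | auto]). nra. Qed.

Lemma rsum_abs f m : Rabs (rsum f m) <= rsum (fun k => Rabs (f k)) m.
Proof. induction m; simpl. rewrite Rabs_R0; lra. eapply Rle_trans. apply Rabs_triang. lra. Qed.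

Lemma cp_plus f g x : continuity_pt f x -> continuity_pt g x -> continuity_pt (fun t => f t + g t) x.
Proof. intros; apply (continuity_pt_plus f g); auto. Qed.
Lemma cp_minus f g x : continuity_pt f x -> continuity_pt g x -> continuity_pt (fun t => f t - g t) x.
Proof. intros; apply (continuity_pt_minus f g); auto. Qed.
Lemma cp_mult f g x : continuity_pt f x -> continuity_pt g x -> continuity_pt (fun t => f t * g t) x.
Proof. intros; apply (continuity_pt_mult f g); auto. Qed.
Lemma cp_const c x : continuity_pt (fun _ => c) x.
Proof. apply continuity_pt_const. intros a b; auto. Qed.
Lemma cp_id x : continuity_pt (fun t => t) x.
Proof. apply derivable_continuous_pt. apply derivable_pt_id. Qed.
Lemma cp_opp f x : continuity_pt f x -> continuity_pt (fun t => - f t) x.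
Proof. intros; apply (continuity_pt_opp f); auto. Qed.
Lemma cp_pow2 f x : continuity_pt f x -> continuity_pt (fun t => f t ^ 2) x.
Proof. intros H. apply (continuity_pt_ext (fun t => f t * f t)). intros; ring. apply cp_mult; auto. Qed.
Lemma cp_div f g x : continuity_pt f x -> continuity_pt g x -> g x <> 0 -> continuity_pt (fun t => f t / g t) x.
Proof. intros; apply (continuity_pt_div f g); auto. Qed.
Lemma cp_cos f x : continuity_pt f x -> continuity_pt (fun t => cos (f t)) x.
Proof. intros H. apply (continuity_pt_comp f cos); auto. apply continuity_cos. Qed.
Lemma cp_sin f x : continuity_pt f x -> continuity_pt (fun t => sin (f t)) x.
Proof. intros H. apply (continuity_pt_comp f sin); auto. apply continuity_sin. Qed.

Lemma cp_rsum (f : nat -> R -> R) m x : (forall k, (k < m)%nat -> continuity_pt (f k) x) ->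
  continuity_pt (fun t => rsum (fun k => f k t) m) x.
Proof. induction m; simpl; intros H. apply cp_const. apply cp_plus. apply IHm; intros; apply H; lia. apply H; lia. Qed.

Ltac cont := repeat first [ apply cp_plus | apply cp_minus | apply cp_mult | apply cp_opp | apply cp_pow2
  | apply cp_cos | apply cp_sin | apply cp_id | apply cp_const ].

Lemma dl_rsum (f : nat -> R -> R) (d : nat -> R) m x :
  (forall k, (k < m)%nat -> derivable_pt_lim (f k) x (d k)) ->
  derivable_pt_lim (fun t => rsum (fun k => f k t) m) x (rsum d m).
Proof. induction m; simpl; intros H.
 - apply derivable_pt_lim_const.
 - apply (derivable_pt_lim_plus (fun t => rsum (fun k => f k t) m) (f m)). apply IHm; intros; apply H; lia. apply H; lia. Qed.

Lemma mono_lemma (H h : R -> R) (E : list R) : forall a b, a <= b ->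
  (forall x, a <= x <= b -> continuity_pt H x) ->
  (forall x, a < x < b -> ~ In x E -> derivable_pt_lim H x (h x) /\ 0 <= h x) ->
  H a <= H b.
Proof.
 induction E as [|e E IH]; intros a b Hab Hc Hd.
 - destruct (Req_dec a b) as [->|Hne]; [lra|].
   assert (pr1 : forall c, a < c < b -> derivable_pt H c).
   { intros c Pc. exists (h c). apply (Hd c Pc). simpl; auto. }
   assert (pr2 : forall c, a < c < b -> derivable_pt (fun t => t) c).
   { intros; apply derivable_pt_id. }
   destruct (MVT H (fun t => t) a b pr1 pr2 ltac:(lra) Hc (fun c _ => cp_id c)) as [c [P Heq]].
   rewrite (derive_pt_eq_0 _ _ (h c) (pr1 c P)) in Heq by (apply (Hd c P); simpl; auto).
   rewrite (derive_pt_eq_0 _ _ 1 (pr2 c P)) in Heq by (apply derivable_pt_lim_id).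
   assert (0 <= h c) by (apply (Hd c P); simpl; auto). nra.
 - destruct (Rlt_dec a e) as [Hae|Hae]; [destruct (Rlt_dec e b) as [Heb|Heb]|].
   + assert (H a <= H e). { apply IH; try lra. intros; apply Hc; lra.
       intros x Hx Hn. apply Hd. lra. simpl. intros [->|Hi]; [lra|auto]. }
     assert (H e <= H b). { apply IH; try lra. intros; apply Hc; lra.
       intros x Hx Hn. apply Hd. lra. simpl. intros [->|Hi]; [lra|auto]. }
     lra.
   + apply IH; auto. intros x Hx Hn. apply Hd; auto. simpl. intros [->|Hi]; [lra|auto].
   + apply IH; auto. intros x Hx Hn. apply Hd; auto. simpl. intros [->|Hi]; [lra|auto].
Qed.

Lemma cont_of_pt f x : continuity_pt f x -> continuous f x.
Proof. intros H. apply continuity_pt_filterlim; auto. Qed.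

Lemma exRI f a b : (forall x, continuity_pt f x) -> ex_RInt f a b.
Proof. intros H. apply (@ex_RInt_continuous R_CompleteNormedModule). intros; apply cont_of_pt; auto. Qed.

Lemma RInt_deriv G a x : (forall x, continuity_pt G x) -> derivable_pt_lim (fun t => RInt G a t) x (G x).
Proof. intros HG. apply is_derive_Reals. apply (is_derive_RInt G (fun t => RInt G a t) a x).
 - apply filter_forall. intros b. apply (@RInt_correct R_CompleteNormedModule). apply exRI; auto.
 - apply cont_of_pt; auto. Qed.

Lemma RInt_aa G a : RInt G a a = 0.
Proof. rewrite RInt_point. reflexivity. Qed.

Lemma FTC_le (F f G : R -> R) (E : list R) a b : a <= b ->
  (forall x, a <= x <= b -> continuity_pt F x) -> (forall x, continuity_pt G x) ->
  (forall x, a < x < b -> ~ In x E -> derivable_pt_lim F x (f x) /\ G x <= f x) ->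
  RInt G a b <= F b - F a.
Proof. intros Hab HF HG Hd.
 assert (M := mono_lemma (fun t => F t - RInt G a t) (fun t => f t - G t) E a b Hab).
 simpl in M. rewrite (RInt_aa G a) in M. cut (F a - 0 <= F b - RInt G a b). lra. apply M.
 - intros x Hx. apply cp_minus; auto. apply derivable_continuous_pt. exists (G x). apply RInt_deriv; auto.
 - intros x Hx Hn. destruct (Hd x Hx Hn) as [H1 H2]. split; [|lra].
   apply (derivable_pt_lim_minus F (fun t => RInt G a t)); auto. apply RInt_deriv; auto.
Qed.

Lemma RInt_sc f a b c : (forall x, continuity_pt f x) -> RInt (fun t => c * f t) a b = c * RInt f a b.
Proof. intros H. exact (@RInt_scal R_CompleteNormedModule f a b c (exRI f a b H)). Qed.

Lemma RInt_add f g a b : (forall x, continuity_pt f x) -> (forall x, continuity_pt g x) ->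
  RInt (fun t => f t + g t) a b = RInt f a b + RInt g a b.
Proof. intros Hf Hg. exact (@RInt_plus R_CompleteNormedModule f g a b (exRI f a b Hf) (exRI g a b Hg)). Qed.

Lemma FTC_eq (F f : R -> R) (E : list R) a b : a <= b ->
  (forall x, a <= x <= b -> continuity_pt F x) -> (forall x, continuity_pt f x) ->
  (forall x, a < x < b -> ~ In x E -> derivable_pt_lim F x (f x)) ->
  RInt f a b = F b - F a.
Proof. intros Hab HF Hf Hd. apply Rle_antisym.
 - apply (FTC_le F f f E); auto. intros; split; auto; lra.
 - assert (RInt (fun t => - f t) a b <= (fun t => - F t) b - (fun t => - F t) a).
   { apply (FTC_le (fun t => - F t) (fun t => - f t) (fun t => - f t) E); auto.
     intros; apply cp_opp; auto. intros; apply cp_opp; auto.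
     intros x Hx Hn. split; [|lra]. apply (derivable_pt_lim_opp F); auto. }
   assert (RInt (fun t => - f t) a b = - RInt f a b).
   { replace (- RInt f a b) with (-1 * RInt f a b) by ring. rewrite <- RInt_sc by auto. apply RInt_ext. intros. change (- f x = -1 * f x). ring. }
   lra.
Qed.

Lemma RInt_lin f g a b c d : (forall x, continuity_pt f x) -> (forall x, continuity_pt g x) ->
  RInt (fun x => c * f x + d * g x) a b = c * RInt f a b + d * RInt g a b.
Proof. intros Hf Hg. rewrite RInt_add. rewrite !RInt_sc; auto. intros; cont; auto. intros; cont; auto. Qed.

Lemma RInt_mono f g a b : a <= b -> (forall x, continuity_pt f x) -> (forall x, continuity_pt g x) ->
  (forall x, a <= x <= b -> f x <= g x) -> RInt f a b <= RInt g a b.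
Proof. intros; apply RInt_le; auto; try apply exRI; auto. intros; apply H2; lra. Qed.

Lemma RInt_nonneg f a b : a <= b -> (forall x, continuity_pt f x) ->
  (forall x, a <= x <= b -> 0 <= f x) -> 0 <= RInt f a b.
Proof. intros Hab Hf H. replace 0 with (RInt (fun _ => 0) a b).
 apply RInt_mono; auto. intros; apply cp_const.
 rewrite (@RInt_const R_CompleteNormedModule). unfold scal; simpl; unfold mult; simpl. ring. Qed.

Lemma RInt_pos f a b x0 : a <= x0 <= b -> a < b -> (forall x, continuity_pt f x) ->
  (forall x, a <= x <= b -> 0 <= f x) -> 0 < f x0 -> 0 < RInt f a b.
Proof. intros Hx0 Hab Hf Hnn Hpos.
 destruct (Hf x0 (f x0 / 2) ltac:(lra)) as [del [Hdel Hcl]].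
 set (c := Rmax a (x0 - del/2)). set (d := Rmin b (x0 + del/2)).
 assert (Hc: a <= c) by (unfold c; apply Rmax_l). assert (Hd: d <= b) by (unfold d; apply Rmin_l).
 assert (Hcd: c < d).
 { unfold c, d, Rmax, Rmin. destruct (Rle_dec a (x0 - del/2)); destruct (Rle_dec b (x0 + del/2)); lra. }
 assert (Hc2: x0 - del/2 <= c) by (unfold c; apply Rmax_r). assert (Hd2: d <= x0 + del/2) by (unfold d; apply Rmin_r).
 assert (E1 : RInt f a c + RInt f c d = RInt f a d) by (apply (@RInt_Chasles R_CompleteNormedModule); apply exRI; auto).
 assert (E2 : RInt f a d + RInt f d b = RInt f a b) by (apply (@RInt_Chasles R_CompleteNormedModule); apply exRI; auto).
 assert (0 <= RInt f a c) by (apply RInt_nonneg; auto; intros; apply Hnn; lra).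
 assert (0 <= RInt f d b) by (apply RInt_nonneg; auto; intros; apply Hnn; lra).
 assert (0 < RInt f c d).
 { apply RInt_gt_0; auto. intros x Hx.
   destruct (Req_dec x x0) as [->|Hne]; [lra|].
   assert (Hx' := Hcl x). simpl in Hx'. unfold R_dist, D_x, no_cond in Hx'.
   assert (Rabs (f x - f x0) < f x0 / 2). { apply Hx'. split; auto. apply Rabs_def1; lra. }
   apply Rabs_def2 in H1. lra.
   intros; apply cont_of_pt; auto. }
 unfold plus in E1, E2; simpl in E1, E2. lra.
Qed.

Definition gcot (w x0 d x : R) := w * cos (w * (x - x0) + d) / sin (w * (x - x0) + d).

Lemma gcot_deriv w x0 d x : sin (w * (x - x0) + d) <> 0 ->
  derivable_pt_lim (gcot w x0 d) x (- (w * w) / (sin (w * (x - x0) + d))^2).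
Proof. intros Hs. apply is_derive_Reals. unfold gcot.
 auto_derive. auto.
 assert (H1 := sin2_cos2 (w * (x - x0) + d)). unfold Rsqr in H1.
 field_simplify; auto. replace (x + - x0) with (x - x0) by ring.
 unfold Rdiv. f_equal. set (s := sin _) in *. set (c := cos _) in *. nra.
Qed.

Lemma dl_sq f x l : derivable_pt_lim f x l -> derivable_pt_lim (fun t => f t ^ 2) x (2 * f x * l).
Proof. intros H. apply (derivable_pt_lim_ext (fun t => f t * f t)). intros; ring.
 replace (2 * f x * l) with (l * f x + f x * l) by ring. apply (derivable_pt_lim_mult f f); auto. Qed.

Lemma picone (f df : R -> R) E a b x0 w d : a <= b -> (forall x, continuity_pt f x) -> (forall x, continuity_pt df x) ->
 (forall x, a < x < b -> ~In x E -> derivable_pt_lim f x (df x)) ->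
 (forall x, a <= x <= b -> 0 < sin (w*(x-x0)+d)) ->
 RInt (fun x => w*w * f x ^2 - df x ^2) a b <= gcot w x0 d a * f a ^2 - gcot w x0 d b * f b ^2.
Proof. intros Hab Hf Hdf Hd Hs.
 assert (Hg : forall x, a <= x <= b -> continuity_pt (gcot w x0 d) x).
 { intros x Hx. unfold gcot. apply cp_div. cont. apply cp_sin. cont. specialize (Hs x Hx). lra. }
 match goal with |- _ <= ?R => replace R with
   ((fun x => - (gcot w x0 d x * f x ^ 2)) b - (fun x => - (gcot w x0 d x * f x ^ 2)) a) by (simpl; ring) end.
 apply (FTC_le (fun x => - (gcot w x0 d x * f x ^ 2)) (fun x => - ((- (w * w) / (sin (w * (x - x0) + d))^2) * f x ^ 2 + gcot w x0 d x * (2 * f x * df x))) _ E); auto.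
 - intros x Hx. apply cp_opp. apply cp_mult; auto. apply cp_pow2; auto.
 - intros x. cont; auto.
 - intros x Hx Hn. assert (Hsx := Hs x ltac:(lra)). split.
   + apply (derivable_pt_lim_opp (fun x => gcot w x0 d x * f x ^ 2)).
     apply (derivable_pt_lim_mult (gcot w x0 d) (fun x => f x ^ 2)).
     apply gcot_deriv; lra. apply dl_sq; auto.
   + assert (H1 := sin2_cos2 (w * (x - x0) + d)). unfold Rsqr in H1.
     assert (Hk : (w * w) / sin (w * (x - x0) + d) ^ 2 = w * w + gcot w x0 d x ^ 2).
     { unfold gcot. field_simplify; try lra. set (s := sin _) in *. set (c := cos _) in *.
       unfold Rdiv. f_equal. nra. }
     set (g := gcot w x0 d x) in *.
     replace (- (- (w * w) / sin (w * (x - x0) + d) ^ 2 * f x ^ 2 + g * (2 * f x * df x))) with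
       ((w * w) / sin (w * (x - x0) + d) ^ 2 * f x ^ 2 - g * (2 * f x * df x)) by (field; lra).
     rewrite Hk. assert (0 <= (g * f x - df x)^2) by apply pow2_ge_0. nra.
Qed.

Lemma dl_shift f x l c : derivable_pt_lim f x l -> derivable_pt_lim (fun t => f t - c) x l.
Proof. intros H. replace l with (l - 0) by ring. apply (derivable_pt_lim_minus f (fun _ => c)); auto.
 apply derivable_pt_lim_const. Qed.

Lemma cp_comp (f g : R -> R) x : continuity_pt f x -> continuity_pt g (f x) -> continuity_pt (fun t => g (f t)) x.
Proof. intros; apply (continuity_pt_comp f g); auto. Qed.

Lemma RIext (f g : R -> R) a b : (forall x, f x = g x) -> RInt f a b = RInt g a b.
Proof. intros H. apply RInt_ext. intros; apply H. Qed.

Lemma Chas f a b c : (forall x, continuity_pt f x) -> RInt f a b + RInt f b c = RInt f a c.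
Proof. intros H. exact (@RInt_Chasles R_CompleteNormedModule f a b c (exRI f a b H) (exRI f b c H)). Qed.

Lemma PW (f df : R -> R) E s : 0 < s -> (forall x, continuity_pt f x) -> (forall x, continuity_pt df x) ->
 (forall x, -s < x < s -> ~In x E -> derivable_pt_lim f x (df x)) -> f s = f (-s) ->
 exists c, forall k, k <= (PI/s)^2 -> 0 <= RInt (fun x => df x ^2 - k * (f x - c)^2) (-s) s.
Proof. intros Hs Hf Hdf Hd Hper.
 destruct (IVT_cor (fun x => f x - f (x + s)) (-s) 0) as [p [Hp Hhp]].
 { intros x. apply cp_minus; auto. apply (cp_comp (fun t => t + s) f); auto. cont. }
 lra.
 { replace (0 + s) with s by ring. replace (-s + s) with 0 by ring. rewrite Hper.
   assert (0 <= (f (-s) - f 0)^2) by apply pow2_ge_0. nra. }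
 set (c := f p). exists c. set (q := p + s).
 assert (Hq : f q = c) by (unfold q, c; lra).
 set (g := fun x => f x - c).
 assert (Hcg : forall x, continuity_pt g x) by (intros; unfold g; cont; auto).
 assert (Hcont : forall w, forall x, continuity_pt (fun x => w * w * g x ^ 2 - df x ^ 2) x) by (intros; cont; auto).
 assert (Hdg : forall x, -s < x < s -> ~ In x E -> derivable_pt_lim g x (df x)) by (intros; apply dl_shift; auto).
 assert (Hw : forall w, 0 < w -> w < PI / s -> RInt (fun x => w * w * g x ^ 2 - df x ^ 2) (-s) s <= 0).
 { intros w Hw0 Hw1. set (d := (PI - w * s) / 2).
   assert (Hws : w * s < PI) by (apply (Rmult_lt_compat_r s) in Hw1; [|lra]; unfold Rdiv in Hw1; rewrite Rmult_assoc, Rinv_l in Hw1; lra).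
   assert (Hsin : forall t, 0 <= t <= s -> 0 < sin (w * t + d)).
   { intros t Ht. apply sin_gt_0; unfold d; nra. }
   assert (I1 := picone g df E p q p w d ltac:(unfold q; lra) Hcg Hdf
     ltac:(intros; apply Hdg; auto; unfold q in *; lra) ltac:(intros; apply Hsin; unfold q in *; lra)).
   assert (I2 := picone g df E q s q w d ltac:(unfold q; lra) Hcg Hdf
     ltac:(intros; apply Hdg; auto; unfold q in *; lra) ltac:(intros; apply Hsin; unfold q in *; lra)).
   assert (I3 := picone g df E (-s) p (q - 2 * s) w d ltac:(lra) Hcg Hdf
     ltac:(intros; apply Hdg; auto; unfold q in *; lra)
     ltac:(intros x Hx; replace (w * (x - (q - 2 * s)) + d) with (w * (x - q + 2 * s) + d) by ring; apply Hsin; unfold q in *; lra)).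
   assert (Hgp : g p = 0) by (unfold g, c; ring).
   assert (Hgq : g q = 0) by (unfold g; rewrite Hq; ring).
   assert (Hgs : g s = g (-s)) by (unfold g; rewrite Hper; auto).
   assert (Hcot : gcot w (q - 2 * s) d (-s) = gcot w q d s).
   { unfold gcot. replace (w * (- s - (q - 2 * s)) + d) with (w * (s - q) + d) by ring. auto. }
   rewrite Hgp, Hgq in *. rewrite Hcot, <- Hgs in I3.
   rewrite <- (Chas _ (-s) q s) by auto. rewrite <- (Chas _ (-s) p q) by auto.
   replace (0 ^ 2) with 0 in * by ring. lra. }
 intros k Hk.
 assert (HA : 0 <= RInt (fun x => g x ^ 2) (-s) s) by (apply RInt_nonneg; [lra| intros; cont; auto | intros; apply pow2_ge_0]).
 assert (HB : 0 <= RInt (fun x => df x ^ 2) (-s) s) by (apply RInt_nonneg; [lra| intros; cont; auto | intros; apply pow2_ge_0]).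
 set (A := RInt (fun x => g x ^ 2) (-s) s) in *. set (B := RInt (fun x => df x ^ 2) (-s) s) in *.
 assert (Hlin : forall a b, RInt (fun x => a * df x ^ 2 + b * g x ^ 2) (-s) s = a * B + b * A).
 { intros. apply RInt_lin; intros; cont; auto. }
 replace (RInt (fun x => df x ^ 2 - k * (f x - c) ^ 2) (-s) s) with (1 * B + (-k) * A)
   by (rewrite <- Hlin; apply RIext; intros; unfold g; ring).
 destruct (Rle_dec k 0). nra.
 destruct (Rle_dec (k * A) B). lra. exfalso.
 assert (HA0 : 0 < A) by nra.
 assert (HBA : B / A < k) by (apply (Rmult_lt_reg_r A); [lra|]; unfold Rdiv; rewrite Rmult_assoc, Rinv_l; lra).
 set (m := (B / A + (PI / s) ^ 2) / 2).
 assert (HBA0 : 0 <= B / A) by (apply Rdiv_le_0_compat; lra).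
 assert (Hm0 : 0 < m) by (unfold m; assert (0 < (PI/s)^2) by (apply pow_lt; apply Rdiv_lt_0_compat; [apply PI_RGT_0|lra]); lra).
 assert (Hm1 : m < (PI / s) ^ 2) by (unfold m; lra).
 assert (Hm2 : B / A < m) by (unfold m; lra).
 assert (Hsq := sqrt_lt_R0 m Hm0).
 assert (Hsl : sqrt m < PI / s).
 { rewrite <- (sqrt_pow2 (PI / s)). apply sqrt_lt_1; lra. left; apply Rdiv_lt_0_compat; [apply PI_RGT_0|lra]. }
 specialize (Hw (sqrt m) Hsq Hsl).
 replace (RInt (fun x => sqrt m * sqrt m * g x ^ 2 - df x ^ 2) (-s) s) with ((-1) * B + m * A) in Hw
   by (rewrite <- Hlin; apply RIext; intros; rewrite sqrt_sqrt by lra; ring).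
 assert (m * A <= B) by lra.
 assert (m <= B / A) by (apply (Rmult_le_reg_r A); [lra|]; unfold Rdiv; rewrite Rmult_assoc, Rinv_l; lra).
 lra.
Qed.

Lemma alg_ineq C S u1 u2 du1 du2 v c1 c2 : C * C + S * S = 1 ->
  let z1 := C * u1 + S * u2 in let z2 := - S * u1 + C * u2 in
  let dz1 := - v * S * u1 + C * du1 + v * C * u2 + S * du2 in
  let dz2 := - v * C * u1 - S * du1 - v * S * u2 + C * du2 in
  / 2 * (dz1 ^ 2 - 4 * v ^ 2 * (z1 - c1) ^ 2) + / 2 * (dz2 ^ 2 - 4 * v ^ 2 * (z2 - c2) ^ 2)
   + 2 * v * (c1 * dz2 - c2 * dz1) <= du1 ^ 2 + du2 ^ 2 - v ^ 2 * (u1 ^ 2 + u2 ^ 2).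
Proof. intros H z1 z2 dz1 dz2.
 assert (Hid : dz1 ^ 2 + dz2 ^ 2 + 2 * v * (z1 * dz2 - z2 * dz1) = (C * C + S * S) * (du1 ^ 2 + du2 ^ 2 - v ^ 2 * (u1 ^ 2 + u2 ^ 2)))
   by (unfold z1, z2, dz1, dz2; ring).
 rewrite H, Rmult_1_l in Hid. rewrite <- Hid.
 assert (0 <= (dz2 + 2 * v * (z1 - c1)) ^ 2 + (dz1 - 2 * v * (z2 - c2)) ^ 2) by (apply Rplus_le_le_0_compat; apply pow2_ge_0).
 nra.
Qed.

Lemma dcos v x : derivable_pt_lim (fun t => cos (v * t)) x (- v * sin (v * x)).
Proof. apply is_derive_Reals. auto_derive; auto. ring. Qed.
Lemma dsin v x : derivable_pt_lim (fun t => sin (v * t)) x (v * cos (v * x)).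
Proof. apply is_derive_Reals. auto_derive; auto. ring. Qed.

Lemma dl_mul f g x a b : derivable_pt_lim f x a -> derivable_pt_lim g x b ->
  derivable_pt_lim (fun t => f t * g t) x (a * g x + f x * b).
Proof. intros; apply (derivable_pt_lim_mult f g); auto. Qed.
Lemma dl_add f g x a b : derivable_pt_lim f x a -> derivable_pt_lim g x b ->
  derivable_pt_lim (fun t => f t + g t) x (a + b).
Proof. intros; apply (derivable_pt_lim_plus f g); auto. Qed.
Lemma dl_ext f g x a b : derivable_pt_lim f x a -> (forall t, f t = g t) -> a = b -> derivable_pt_lim g x b.
Proof. intros H1 H2 ->. apply (derivable_pt_lim_ext f); auto. Qed.

Definition thp (th : R) := Rmin th (2 * PI - th).

Lemma CW (u1 u2 du1 du2 : R -> R) E s th : 0 < s -> 0 < th < 2 * PI ->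
  (forall x, continuity_pt u1 x) -> (forall x, continuity_pt u2 x) ->
  (forall x, continuity_pt du1 x) -> (forall x, continuity_pt du2 x) ->
  (forall x, -s < x < s -> ~ In x E -> derivable_pt_lim u1 x (du1 x) /\ derivable_pt_lim u2 x (du2 x)) ->
  u1 s = cos th * u1 (-s) - sin th * u2 (-s) -> u2 s = sin th * u1 (-s) + cos th * u2 (-s) ->
  0 <= RInt (fun x => du1 x ^ 2 + du2 x ^ 2 - (thp th / (2 * s)) ^ 2 * (u1 x ^ 2 + u2 x ^ 2)) (-s) s.
Proof. intros Hs Hth Hu1 Hu2 Hd1 Hd2 Hd Hb1 Hb2.
 set (v := if Rle_dec th PI then th / (2 * s) else (th - 2 * PI) / (2 * s)).
 assert (Hv2 : v ^ 2 = (thp th / (2 * s)) ^ 2).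
 { unfold v, thp, Rmin. destruct (Rle_dec th PI); destruct (Rle_dec th (2 * PI - th)); try lra;
   field; lra. }
 assert (Hv4 : 4 * v ^ 2 <= (PI / s) ^ 2).
 { rewrite Hv2. unfold thp, Rmin. destruct (Rle_dec th (2 * PI - th)).
   - replace (4 * (th / (2 * s)) ^ 2) with ((th / s) ^ 2) by (field; lra).
     apply pow_incr. split. apply Rdiv_le_0_compat; lra. unfold Rdiv; apply Rmult_le_compat_r. left; apply Rinv_0_lt_compat; lra. lra.
   - replace (4 * ((2 * PI - th) / (2 * s)) ^ 2) with (((2 * PI - th) / s) ^ 2) by (field; lra).
     apply pow_incr. split. apply Rdiv_le_0_compat; lra. unfold Rdiv; apply Rmult_le_compat_r. left; apply Rinv_0_lt_compat; lra. lra. }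
 assert (Hct : cos th = cos (2 * (v * s)) /\ sin th = sin (2 * (v * s))).
 { unfold v. destruct (Rle_dec th PI).
   - replace (2 * (th / (2 * s) * s)) with th by (field; lra). auto.
   - replace (2 * ((th - 2 * PI) / (2 * s) * s)) with (th - 2 * PI) by (field; lra).
     rewrite cos_minus, sin_minus, cos_2PI, sin_2PI. split; ring. }
 destruct Hct as [Hc Hsn]. rewrite cos_2a in Hc. rewrite sin_2a in Hsn.
 set (z1 := fun x => cos (v * x) * u1 x + sin (v * x) * u2 x).
 set (z2 := fun x => - sin (v * x) * u1 x + cos (v * x) * u2 x).
 set (dz1 := fun x => - v * sin (v * x) * u1 x + cos (v * x) * du1 x + v * cos (v * x) * u2 x + sin (v * x) * du2 x).
 set (dz2 := fun x => - v * cos (v * x) * u1 x - sin (v * x) * du1 x - v * sin (v * x) * u2 x + cos (v * x) * du2 x).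
 assert (Cz1 : forall x, continuity_pt z1 x) by (intros; unfold z1; cont; auto).
 assert (Cz2 : forall x, continuity_pt z2 x) by (intros; unfold z2; cont; auto).
 assert (Cdz1 : forall x, continuity_pt dz1 x) by (intros; unfold dz1; cont; auto).
 assert (Cdz2 : forall x, continuity_pt dz2 x) by (intros; unfold dz2; cont; auto).
 assert (Dz1 : forall x, -s < x < s -> ~ In x E -> derivable_pt_lim z1 x (dz1 x)).
 { intros x Hx Hn. destruct (Hd x Hx Hn) as [D1 D2]. unfold z1, dz1.
   eapply dl_ext. apply dl_add; apply dl_mul; [apply dcos|apply D1|apply dsin|apply D2]. intros; reflexivity. cbv beta; ring. }
 assert (Dz2 : forall x, -s < x < s -> ~ In x E -> derivable_pt_lim z2 x (dz2 x)).
 { intros x Hx Hn. destruct (Hd x Hx Hn) as [D1 D2]. unfold z2, dz2.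
   eapply dl_ext. apply dl_add. apply dl_mul. apply (derivable_pt_lim_opp (fun t => sin (v * t))). apply dsin. apply D1.
   apply dl_mul; [apply dcos|apply D2]. intros; reflexivity. unfold opp_fct; cbv beta; ring. }
 assert (Hneg : v * (- s) = - (v * s)) by ring.
 assert (P1 : z1 s = z1 (-s)).
 { unfold z1. rewrite Hneg, cos_neg, sin_neg, Hb1, Hb2, Hc, Hsn.
   assert (H1 := sin2_cos2 (v * s)). unfold Rsqr in H1.
   set (C := cos (v * s)) in *. set (S := sin (v * s)) in *.
   transitivity ((C * C + S * S) * (C * u1 (-s) - S * u2 (-s))); [ring|]. rewrite Rplus_comm, H1; ring. }
 assert (P2 : z2 s = z2 (-s)).
 { unfold z2. rewrite Hneg, cos_neg, sin_neg, Hb1, Hb2, Hc, Hsn.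
   assert (H1 := sin2_cos2 (v * s)). unfold Rsqr in H1.
   set (C := cos (v * s)) in *. set (S := sin (v * s)) in *.
   transitivity ((C * C + S * S) * (S * u1 (-s) + C * u2 (-s))); [ring|]. rewrite Rplus_comm, H1; ring. }
 destruct (PW z1 dz1 E s Hs Cz1 Cdz1 Dz1 P1) as [c1 W1].
 destruct (PW z2 dz2 E s Hs Cz2 Cdz2 Dz2 P2) as [c2 W2].
 specialize (W1 _ Hv4). specialize (W2 _ Hv4).
 assert (J : RInt (fun x => c1 * dz2 x - c2 * dz1 x) (-s) s = 0).
 { rewrite (FTC_eq (fun x => c1 * z2 x - c2 * z1 x) _ E) by (try lra; intros; cont; auto;
     apply (derivable_pt_lim_minus (fun x => c1 * z2 x) (fun x => c2 * z1 x));
     apply (derivable_pt_lim_scal); auto).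
   cbv beta. rewrite P1, P2. apply Rminus_diag_eq; reflexivity. }
 set (F1 := fun x => dz1 x ^ 2 - 4 * v ^ 2 * (z1 x - c1) ^ 2) in *.
 set (F2 := fun x => dz2 x ^ 2 - 4 * v ^ 2 * (z2 x - c2) ^ 2) in *.
 set (F3 := fun x => c1 * dz2 x - c2 * dz1 x) in *.
 assert (CF1 : forall x, continuity_pt F1 x) by (intros; unfold F1; cont; auto).
 assert (CF2 : forall x, continuity_pt F2 x) by (intros; unfold F2; cont; auto).
 assert (CF3 : forall x, continuity_pt F3 x) by (intros; unfold F3; cont; auto).
 assert (Hsum : RInt (fun x => / 2 * F1 x + / 2 * F2 x + 2 * v * F3 x) (-s) s = / 2 * RInt F1 (-s) s + / 2 * RInt F2 (-s) s + 2 * v * RInt F3 (-s) s).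
 { rewrite (RIext (fun x => / 2 * F1 x + / 2 * F2 x + 2 * v * F3 x) (fun x => 1 * (/ 2 * F1 x + / 2 * F2 x) + (2 * v) * F3 x)) by (intros; ring).
   rewrite RInt_lin; auto. rewrite (RInt_lin F1 F2) by auto. change (@eq R (1 * (/ 2 * RInt F1 (- s) s + / 2 * RInt F2 (- s) s) + 2 * v * RInt F3 (- s) s)
   (/ 2 * RInt F1 (- s) s + / 2 * RInt F2 (- s) s + 2 * v * RInt F3 (- s) s)). ring.
   intros; cont; auto. }
 rewrite <- Hv2.
 assert (Hpt : forall x, / 2 * F1 x + / 2 * F2 x + 2 * v * F3 x <= du1 x ^ 2 + du2 x ^ 2 - v ^ 2 * (u1 x ^ 2 + u2 x ^ 2)).
 { intros x. assert (H1 := sin2_cos2 (v * x)). unfold Rsqr in H1. rewrite Rplus_comm in H1.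
   exact (alg_ineq (cos (v * x)) (sin (v * x)) (u1 x) (u2 x) (du1 x) (du2 x) v c1 c2 H1). }
 assert (Hm := RInt_mono (fun x => / 2 * F1 x + / 2 * F2 x + 2 * v * F3 x)
     (fun x => du1 x ^ 2 + du2 x ^ 2 - v ^ 2 * (u1 x ^ 2 + u2 x ^ 2)) (-s) s ltac:(lra)
     ltac:(intros; cont; auto) ltac:(intros; cont; auto) ltac:(intros; apply Hpt)).
 rewrite Hsum, J in Hm. lra.
Qed.

Lemma opnorm_nonneg n M r : is_opnorm n M r -> 0 <= r.
Proof. intros [Hub _]. eapply Rle_trans; [apply (sqrt_pos (rsum (fun i => (rsum (fun j => M i j * 0) n) ^ 2) n))|].
 apply Hub. exists (fun _ => 0). split; auto. rewrite (rsum_ext _ (fun _ => 0)) by (intros; ring). rewrite rsum_zero; lra. Qed.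

Lemma opnorm_exists n M : exists r, is_opnorm n M r.
Proof.
 set (S := fun t => exists v : nat -> R, rsum (fun j => v j ^ 2) n <= 1 /\
             t = sqrt (rsum (fun i => (rsum (fun j => M i j * v j) n) ^ 2) n)).
 assert (Hb : bound S).
 { exists (sqrt (rsum (fun i => (rsum (fun j => Rabs (M i j)) n) ^ 2) n)).
   intros t [v [Hv ->]]. apply sqrt_le_1_alt. apply rsum_le. intros i Hi.
   assert (Hvj : forall j, (j < n)%nat -> Rabs (v j) <= 1).
   { intros j Hj. assert (v j ^ 2 <= rsum (fun j => v j ^ 2) n) by (apply (term_le_rsum (fun j => v j ^ 2)); [intros; apply pow2_ge_0|auto]).
     assert (Rabs (v j) ^ 2 = v j ^ 2) by apply pow2_abs.
     assert (0 <= Rabs (v j)) by apply Rabs_pos. nra. }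
   assert (Rabs (rsum (fun j => M i j * v j) n) <= rsum (fun j => Rabs (M i j)) n).
   { eapply Rle_trans. apply rsum_abs. apply rsum_le. intros j Hj. rewrite Rabs_mult.
     specialize (Hvj j Hj). assert (0 <= Rabs (M i j)) by apply Rabs_pos. nra. }
   assert (0 <= Rabs (rsum (fun j => M i j * v j) n)) by apply Rabs_pos.
   rewrite <- (pow2_abs (rsum (fun j => M i j * v j) n)). nra. }
 assert (Hne : exists t, S t).
 { exists (sqrt (rsum (fun i => (rsum (fun j => M i j * 0) n) ^ 2) n)). exists (fun _ => 0). split; auto.
   rewrite (rsum_ext _ (fun _ => 0)) by (intros; ring). rewrite rsum_zero; lra. }
 destruct (completeness S Hb Hne) as [r Hr]. exists r. exact Hr.
Qed.

Lemma opnorm_quad n M r u : is_opnorm n M r ->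
  rsum (fun i => u i * rsum (fun j => M i j * u j) n) n <= r * rsum (fun i => u i ^ 2) n.
Proof. intros Hr. assert (Hr0 := opnorm_nonneg n M r Hr). destruct Hr as [Hub _].
 set (a := rsum (fun i => u i ^ 2) n). set (w := fun i => rsum (fun j => M i j * u j) n).
 assert (Ha : 0 <= a) by (apply rsum_nonneg; intros; apply pow2_ge_0).
 set (W := rsum (fun i => w i ^ 2) n).
 assert (HW0 : 0 <= W) by (apply rsum_nonneg; intros; apply pow2_ge_0).
 destruct (Req_dec a 0) as [Ha0|Ha0].
 - assert (Hu := rsum_sq_zero u n Ha0).
   rewrite (rsum_ext _ (fun _ => 0)) by (intros i Hi; rewrite Hu; auto; ring). rewrite rsum_zero. fold a; rewrite Ha0; lra.
 - assert (Hapos : 0 < a) by lra. set (t := sqrt a).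
   assert (Ht : 0 < t) by (apply sqrt_lt_R0; auto).
   assert (Htt : t * t = a) by (apply sqrt_sqrt; lra).
   assert (HWb : W <= r * r * a).
   { assert (Hs := Hub (sqrt (rsum (fun i => (rsum (fun j => M i j * (u j / t)) n) ^ 2) n))).
     assert (Hv : rsum (fun j => (u j / t) ^ 2) n = 1).
     { rewrite (rsum_ext _ (fun j => / (t * t) * u j ^ 2)) by (intros; field; lra). rewrite rsum_scal. fold a. rewrite Htt. field; lra. }
     assert (Hw : rsum (fun i => (rsum (fun j => M i j * (u j / t)) n) ^ 2) n = W / a).
     { rewrite (rsum_ext _ (fun i => / (t * t) * w i ^ 2)). rewrite rsum_scal. rewrite Htt. unfold W; field; lra.
       intros i Hi. rewrite (rsum_ext _ (fun j => / t * (M i j * u j))) by (intros; field; lra).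
       rewrite rsum_scal. unfold w. field; lra. }
     rewrite Hw in Hs. assert (sqrt (W / a) <= r) by (apply Hs; exists (fun j => u j / t); cbv beta; split; [rewrite Hv; lra|rewrite Hw; reflexivity]).
     assert (0 <= W / a) by (apply Rdiv_le_0_compat; lra).
     assert (HH := sqrt_sqrt (W / a) H0). assert (0 <= sqrt (W / a)) by apply sqrt_pos.
     assert (HWa : W / a <= r * r) by nra.
     apply (Rmult_le_reg_r (/ a)). apply Rinv_0_lt_compat; lra.
     replace (r * r * a * / a) with (r * r) by (field; lra). exact HWa. }
   destruct (Req_dec r 0) as [Hr00|Hrpos].
   + rewrite Hr00 in HWb. assert (HW : W = 0) by lra.
     assert (Hw0 := rsum_sq_zero w n HW).
     rewrite (rsum_ext _ (fun _ => 0)) by (intros i Hi; unfold w in Hw0; rewrite Hw0; auto; ring). rewrite rsum_zero. rewrite Hr00; lra.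
   + assert (Hrp : 0 < r) by lra.
     apply Rle_trans with (rsum (fun i => / 2 * (r * u i ^ 2) + / 2 * (/ r * w i ^ 2)) n).
     * apply rsum_le. intros i Hi. fold (w i).
       assert (0 <= (r * u i - w i) ^ 2) by apply pow2_ge_0.
       apply (Rmult_le_reg_l r); auto. field_simplify; [|lra]. nra.
     * rewrite rsum_plus. rewrite (rsum_scal (/ 2) (fun i => r * u i ^ 2)), (rsum_scal (/ 2) (fun i => / r * w i ^ 2)), rsum_scal, rsum_scal. fold a W.
       apply (Rmult_le_reg_l r); auto. field_simplify; [|lra]. nra.
Qed.

Lemma div2a i : ((2 * i) / 2 = i)%nat /\ ((2 * i) mod 2 = 0)%nat.
Proof. split. symmetry; apply (Nat.div_unique _ _ _ 0); lia. symmetry; apply (Nat.mod_unique _ _ i); lia. Qed.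
Lemma div2b i : ((2 * i + 1) / 2 = i)%nat /\ ((2 * i + 1) mod 2 = 1)%nat.
Proof. split. symmetry; apply (Nat.div_unique _ _ _ 1); lia. symmetry; apply (Nat.mod_unique _ _ i); lia. Qed.

Lemma Vsup_op n L V N x : is_Vsupnorm n L V N -> -L <= x <= L ->
  exists r, is_opnorm n (fun i j => V i j x) r /\ r <= N.
Proof. intros [Hub _] Hx. destruct (opnorm_exists n (fun i j => V i j x)) as [r Hr].
 exists r; split; auto. apply Hub. exists x; auto. Qed.

Lemma Vsup_nonneg n L V N : is_Vsupnorm n L V N -> 0 <= L -> 0 <= N.
Proof. intros H HL. destruct (Vsup_op n L V N 0 H ltac:(lra)) as [r [Hr HrN]].
 assert (0 <= r) by (eapply opnorm_nonneg; eauto). lra. Qed.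

Lemma VI2_bound n L V N x u : is_Vsupnorm n L V N -> -L <= x <= L ->
  rsum (fun k => u k * VI2 n V x u k) (2 * n) <= N * rsum (fun k => u k ^ 2) (2 * n).
Proof. intros HN Hx. destruct (Vsup_op n L V N x HN Hx) as [r [Hr HrN]].
 assert (Hr0 : 0 <= r) by (eapply opnorm_nonneg; eauto).
 rewrite !rsum_pairs.
 rewrite (rsum_ext _ (fun i => u (2 * i)%nat * rsum (fun j => V i j x * u (2 * j)%nat) n +
                             u (2 * i + 1)%nat * rsum (fun j => V i j x * u (2 * j + 1)%nat) n)).
 2: { intros i Hi. unfold VI2. destruct (div2a i) as [A1 A2]. destruct (div2b i) as [B1 B2].
      rewrite A1, A2, B1, B2. f_equal. f_equal. apply rsum_ext; intros. f_equal. f_equal. lia. }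
 rewrite rsum_plus, (rsum_plus (fun i => u (2 * i)%nat ^ 2)).
 assert (H1 := opnorm_quad n _ r (fun i => u (2 * i)%nat) Hr).
 assert (H2 := opnorm_quad n _ r (fun i => u (2 * i + 1)%nat) Hr).
 cbv beta in H1, H2.
 assert (0 <= rsum (fun i => u (2 * i)%nat ^ 2) n) by (apply rsum_nonneg; intros; apply pow2_ge_0).
 assert (0 <= rsum (fun i => u (2 * i + 1)%nat ^ 2) n) by (apply rsum_nonneg; intros; apply pow2_ge_0).
 nra.
Qed.

Lemma rsum_nonneg_zero f m : (forall k, (k < m)%nat -> 0 <= f k) -> rsum f m = 0 -> forall k, (k < m)%nat -> f k = 0.
Proof. intros H H0 k Hk. assert (f k <= rsum f m) by (apply term_le_rsum; auto). specialize (H k Hk). lra. Qed.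

Lemma RInt_rsum (f : nat -> R -> R) m a b : (forall i x, (i < m)%nat -> continuity_pt (f i) x) ->
  RInt (fun x => rsum (fun i => f i x) m) a b = rsum (fun i => RInt (f i) a b) m.
Proof. intros H. induction m; simpl.
 - rewrite (@RInt_const R_CompleteNormedModule). unfold scal; simpl; unfold mult; simpl; ring.
 - rewrite (RInt_add (fun x => rsum (fun i => f i x) m) (f m)). rewrite IHm. reflexivity.
   intros; apply H; lia. intros; apply cp_rsum; intros; apply H; lia. intros; apply H; lia. Qed.

Lemma core n L V N (y dy : R -> nat -> R) E s lam th :
  is_Vsupnorm n L V N -> 0 < s <= L ->
  (forall k x, (k < 2 * n)%nat -> continuity_pt (fun t => y t k) x /\ continuity_pt (fun t => dy t k) x) ->
  (forall x, -s < x < s -> ~ In x E -> forall k, (k < 2 * n)%nat ->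
     derivable_pt_lim (fun t => y t k) x (dy x k) /\
     derivable_pt_lim (fun t => dy t k) x (lam * y x k - VI2 n V x (y x) k)) ->
  rot_bc n th (y (-s)) (y s) -> rot_bc n th (dy (-s)) (dy s) ->
  (N < lam \/ (0 < th < 2 * PI /\ N - lam < (thp th / (2 * s)) ^ 2 / 2)) ->
  forall x k, -s <= x <= s -> (k < 2 * n)%nat -> y x k = 0 /\ dy x k = 0.
Proof. intros HN Hs Hc Hd Hby Hbdy Hcase.
 set (Y2 := fun x => rsum (fun k => y x k ^ 2) (2 * n)).
 set (D2 := fun x => rsum (fun k => dy x k ^ 2) (2 * n)).
 set (P := fun x => rsum (fun k => y x k ^ 2 + dy x k ^ 2) (2 * n)).
 assert (CY : forall x, continuity_pt Y2 x) by (intros; unfold Y2; apply cp_rsum; intros; apply cp_pow2; apply Hc; auto).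
 assert (CD : forall x, continuity_pt D2 x) by (intros; unfold D2; apply cp_rsum; intros; apply cp_pow2; apply Hc; auto).
 assert (CP : forall x, continuity_pt P x) by (intros; unfold P; apply cp_rsum; intros; apply cp_plus; apply cp_pow2; apply Hc; auto).
 assert (HP : forall x, P x = Y2 x + D2 x) by (intros; unfold P, Y2, D2; apply rsum_plus).
 assert (Y0 : forall x, 0 <= Y2 x) by (intros; apply rsum_nonneg; intros; apply pow2_ge_0).
 assert (D0 : forall x, 0 <= D2 x) by (intros; apply rsum_nonneg; intros; apply pow2_ge_0).
 set (G := fun x => D2 x + (lam - N) * Y2 x).
 assert (CG : forall x, continuity_pt G x) by (intros; unfold G; cont; auto).
 assert (HG : RInt G (-s) s <= 0).
 { set (F := fun x => rsum (fun k => y x k * dy x k) (2 * n)).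
   assert (HF : F s = F (-s)).
   { unfold F. rewrite !rsum_pairs. apply rsum_ext. intros i Hi.
     destruct (Hby i Hi) as [B1 B2]. destruct (Hbdy i Hi) as [B3 B4].
     rewrite B1, B2, B3, B4. assert (H1 := sin2_cos2 th). unfold Rsqr in H1.
     set (C := cos th) in *. set (S := sin th) in *.
     transitivity ((S * S + C * C) * (y (-s) (2 * i)%nat * dy (-s) (2 * i)%nat + y (-s) (2 * i + 1)%nat * dy (-s) (2 * i + 1)%nat)); [ring|].
     rewrite H1; ring. }
   replace 0 with (F s - F (-s)) by lra.
   apply (FTC_le F (fun x => rsum (fun k => dy x k * dy x k + y x k * (lam * y x k - VI2 n V x (y x) k)) (2 * n)) G E); auto.
   - lra.
   - intros x _. unfold F. apply cp_rsum. intros k Hk. apply cp_mult; apply Hc; auto.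
   - intros x Hx Hn. split.
     + unfold F. apply dl_rsum. intros k Hk. destruct (Hd x Hx Hn k Hk) as [D1 D3].
       apply (dl_mul (fun t => y t k) (fun t => dy t k)); auto.
     + rewrite (rsum_ext _ (fun k => dy x k ^ 2 + lam * y x k ^ 2 - y x k * VI2 n V x (y x) k)) by (intros; ring).
       rewrite rsum_minus, rsum_plus, rsum_scal.
       assert (HV := VI2_bound n L V N x (y x) HN ltac:(lra)).
       unfold G, D2, Y2. lra. }
 assert (HI : exists kap, 0 < kap /\ RInt (fun x => kap * P x) (-s) s <= 0).
 { destruct Hcase as [Hl | [Hth Hl]].
   - exists (Rmin 1 (lam - N)). split. apply Rmin_glb_lt; lra.
     eapply Rle_trans; [|exact HG]. apply RInt_mono; [lra| intros; cont; auto | auto |].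
     intros x _. unfold G. rewrite HP. specialize (Y0 x). specialize (D0 x).
     assert (Rmin 1 (lam - N) <= 1) by apply Rmin_l. assert (Rmin 1 (lam - N) <= lam - N) by apply Rmin_r.
     assert (0 < Rmin 1 (lam - N)) by (apply Rmin_glb_lt; lra). nra.
   - set (nu2 := (thp th / (2 * s)) ^ 2) in *.
     set (W := fun x => D2 x - nu2 * Y2 x).
     assert (CW0 : forall x, continuity_pt W x) by (intros; unfold W; cont; auto).
     assert (HW : 0 <= RInt W (-s) s).
     { rewrite (RIext W (fun x => rsum (fun i => (fun i x => dy x (2 * i)%nat ^ 2 + dy x (2 * i + 1)%nat ^ 2 - nu2 * (y x (2 * i)%nat ^ 2 + y x (2 * i + 1)%nat ^ 2)) i x) n)).
       2: { intros x. unfold W, D2, Y2. rewrite !rsum_pairs. rewrite <- rsum_scal, <- rsum_minus. apply rsum_ext. intros; ring. }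
       rewrite RInt_rsum. apply rsum_nonneg. intros i Hi.
       + destruct (Hby i Hi) as [B1 B2].
         apply (CW (fun t => y t (2 * i)%nat) (fun t => y t (2 * i + 1)%nat) (fun t => dy t (2 * i)%nat) (fun t => dy t (2 * i + 1)%nat) E s th); try lra; auto.
         * intros; apply Hc; lia.
         * intros; apply Hc; lia.
         * intros; apply Hc; lia.
         * intros; apply Hc; lia.
         * intros x Hx Hn. split; apply (Hd x Hx Hn); lia.
       + intros i x Hi. cont; apply Hc; lia. }
     exists (Rmin (/ 2) (lam - N + nu2 / 2)). split. apply Rmin_glb_lt; lra.
     assert (HGW : RInt (fun x => 1 * G x + (- / 2) * W x) (-s) s = 1 * RInt G (-s) s + (- / 2) * RInt W (-s) s) by (apply RInt_lin; auto).
     eapply Rle_trans; [apply (RInt_mono _ (fun x => 1 * G x + (- / 2) * W x)); [lra|intros; cont; auto|intros; cont; auto|]|].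
     + intros x _. unfold G, W. rewrite HP. specialize (Y0 x). specialize (D0 x).
       assert (Rmin (/ 2) (lam - N + nu2 / 2) <= / 2) by apply Rmin_l.
       assert (Rmin (/ 2) (lam - N + nu2 / 2) <= lam - N + nu2 / 2) by apply Rmin_r.
       assert (0 < Rmin (/ 2) (lam - N + nu2 / 2)) by (apply Rmin_glb_lt; lra). nra.
     + rewrite HGW. lra. }
 destruct HI as [kap [Hk HI]].
 assert (HP0 : forall x, -s <= x <= s -> P x = 0).
 { intros x Hx. destruct (Req_dec (P x) 0) as [|Hne]; auto. exfalso.
   assert (0 <= P x) by (rewrite HP; specialize (Y0 x); specialize (D0 x); lra).
   assert (0 < RInt (fun x => kap * P x) (-s) s).
   { apply (RInt_pos _ _ _ x); auto; try lra. intros; cont; auto.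
     intros t _. rewrite HP. specialize (Y0 t). specialize (D0 t). nra. nra. }
   lra. }
 intros x k Hx Hkk. assert (H0 := rsum_nonneg_zero _ _ ltac:(intros; apply Rplus_le_le_0_compat; apply pow2_ge_0) (HP0 x Hx) k Hkk).
 cbv beta in H0. assert (0 <= y x k ^ 2) by apply pow2_ge_0. assert (0 <= dy x k ^ 2) by apply pow2_ge_0.
 split; nra.
Qed.

Definition clamp a b x := Rmax a (Rmin b x).

Lemma clamp_in a b x : a <= b -> a <= clamp a b x <= b.
Proof. intros; unfold clamp, Rmax, Rmin; repeat destruct Rle_dec; lra. Qed.
Lemma clamp_id a b x : a <= x <= b -> clamp a b x = x.
Proof. intros; unfold clamp, Rmax, Rmin; repeat destruct Rle_dec; lra. Qed.
Lemma clamp_lip a b x t : a <= b -> Rabs (clamp a b t - clamp a b x) <= Rabs (t - x).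
Proof. intros; unfold clamp, Rmax, Rmin; repeat destruct Rle_dec; unfold Rabs; repeat destruct Rcase_abs; lra. Qed.

Lemma cont_clamp f a b : a <= b -> (forall x, a <= x <= b -> limit1_in f (fun y => a <= y <= b) (f x) x) ->
  forall x, continuity_pt (fun t => f (clamp a b t)) x.
Proof. intros Hab Hc x eps Heps.
 destruct (Hc (clamp a b x) (clamp_in a b x Hab) eps Heps) as [alp [Halp H]].
 exists alp. split; auto. intros t [_ Ht]. simpl in *. unfold R_dist in *.
 destruct (Req_dec (clamp a b t) (clamp a b x)) as [E|E].
 - rewrite E. unfold Rminus; rewrite Rplus_opp_r, Rabs_R0; auto.
 - apply H. split. apply clamp_in; auto. simpl; unfold R_dist.
   eapply Rle_lt_trans. apply clamp_lip; auto. auto. Qed.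

Lemma deriv_local f g x l del : 0 < del -> (forall t, Rabs (t - x) < del -> g t = f t) ->
  derivable_pt_lim f x l -> derivable_pt_lim g x l.
Proof. intros Hdel Heq H eps Heps. destruct (H eps Heps) as [d Hd].
 assert (Hm : 0 < Rmin d del) by (apply Rmin_glb_lt; [apply cond_pos|auto]).
 exists (mkposreal _ Hm). intros h Hh0 Hh. simpl in Hh.
 rewrite !Heq. apply Hd; auto. eapply Rlt_le_trans; [apply Hh|apply Rmin_l].
 replace (x - x) with 0 by ring; rewrite Rabs_R0; auto.
 replace (x + h - x) with h by ring. eapply Rlt_le_trans; [apply Hh|apply Rmin_r]. Qed.

Lemma deriv_clamp f a b x l : a < x < b -> derivable_pt_lim f x l -> derivable_pt_lim (fun t => f (clamp a b t)) x l.
Proof. intros Hx H. apply (deriv_local f _ x l (Rmin (x - a) (b - x))). apply Rmin_glb_lt; lra.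
 intros t Ht. rewrite clamp_id; auto.
 assert (Rmin (x - a) (b - x) <= x - a) by apply Rmin_l. assert (Rmin (x - a) (b - x) <= b - x) by apply Rmin_r.
 unfold Rabs in Ht; destruct Rcase_abs in Ht; lra. auto. Qed.

Lemma eigen_false n L V N th s lam :
  is_Vsupnorm n L V N -> 0 < s <= L ->
  (N < lam \/ (0 < th < 2 * PI /\ N - lam < (thp th / (2 * s)) ^ 2 / 2)) ->
  ~ is_eigenvalue n V th s lam.
Proof. intros HN Hs Hcase [y [dy [Hc [[E HE] [B1 [B2 [x0 [k0 [Hx0 [Hk0 Hnz]]]]]]]]]].
 set (yc := fun t k => y (clamp (-s) s t) k). set (dyc := fun t k => dy (clamp (-s) s t) k).
 assert (Hss : -s <= s) by lra.
 assert (Z := core n L V N yc dyc E s lam th HN Hs).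
 assert (Hyc : forall x, -s <= x <= s -> yc x = y x).
 { intros x Hx. unfold yc. rewrite clamp_id; auto. }
 assert (Hdyc : forall x, -s <= x <= s -> dyc x = dy x).
 { intros x Hx. unfold dyc. rewrite clamp_id; auto. }
 assert (P1 : forall k x, (k < 2 * n)%nat -> continuity_pt (fun t => yc t k) x /\ continuity_pt (fun t => dyc t k) x).
 { intros k x Hk. split; unfold yc, dyc; apply (cont_clamp (fun t => _ t k)); auto; apply Hc; auto. }
 assert (P2 : forall x, -s < x < s -> ~ In x E -> forall k, (k < 2 * n)%nat ->
     derivable_pt_lim (fun t => yc t k) x (dyc x k) /\
     derivable_pt_lim (fun t => dyc t k) x (lam * yc x k - VI2 n V x (yc x) k)).
 { intros x Hx Hn k Hk. rewrite Hyc, Hdyc by lra. destruct (HE x Hx Hn k Hk) as [D1 D2]. split.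
   + apply (deriv_clamp (fun t => y t k)); auto.
   + apply (deriv_clamp (fun t => dy t k)); auto. }
 assert (P3 : rot_bc n th (yc (- s)) (yc s)) by (rewrite !Hyc by lra; auto).
 assert (P4 : rot_bc n th (dyc (- s)) (dyc s)) by (rewrite !Hdyc by lra; auto).
 destruct (Z P1 P2 P3 P4 Hcase x0 k0 Hx0 Hk0) as [Z1 _].
 rewrite Hyc in Z1 by auto. auto.
Qed.

Lemma rot_ode (f1 f2 : R -> R) E s th : 0 < s ->
  (forall x, continuity_pt f1 x) -> (forall x, continuity_pt f2 x) ->
  (forall x, -s < x < s -> ~ In x E -> derivable_pt_lim f1 x (- (th / (2 * s)) * f2 x) /\
                                      derivable_pt_lim f2 x ((th / (2 * s)) * f1 x)) ->
  f1 s = cos th * f1 (-s) - sin th * f2 (-s) /\ f2 s = sin th * f1 (-s) + cos th * f2 (-s).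
Proof. intros Hs C1 C2 Hd. set (c := th / (2 * s)). set (A := f1 (-s)). set (B := f2 (-s)).
 set (e1 := fun x => f1 x - (cos (c * (x + s)) * A - sin (c * (x + s)) * B)).
 set (e2 := fun x => f2 x - (sin (c * (x + s)) * A + cos (c * (x + s)) * B)).
 set (Q := fun x => e1 x ^ 2 + e2 x ^ 2).
 assert (CQ : forall x, continuity_pt Q x) by (intros; unfold Q, e1, e2; cont; auto).
 assert (DQ : forall x, -s < x < s -> ~ In x E -> derivable_pt_lim Q x 0).
 { intros x Hx Hn. destruct (Hd x Hx Hn) as [D1 D2].
   assert (T1 : derivable_pt_lim (fun x => cos (c * (x + s)) * A - sin (c * (x + s)) * B) x
                  (- c * (sin (c * (x + s)) * A + cos (c * (x + s)) * B))).
   { apply is_derive_Reals. auto_derive; auto. ring. }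
   assert (T2 : derivable_pt_lim (fun x => sin (c * (x + s)) * A + cos (c * (x + s)) * B) x
                  (c * (cos (c * (x + s)) * A - sin (c * (x + s)) * B))).
   { apply is_derive_Reals. auto_derive; auto. ring. }
   assert (E1 := derivable_pt_lim_minus _ _ _ _ _ D1 T1).
   assert (E2 := derivable_pt_lim_minus _ _ _ _ _ D2 T2).
   eapply dl_ext. apply dl_add; apply dl_sq; [apply E1|apply E2]. intros; reflexivity.
   unfold e1, e2, minus_fct. cbv beta. fold c. ring. }
 assert (M1 := mono_lemma Q (fun _ => 0) E (-s) s ltac:(lra) ltac:(auto) ltac:(intros x Hx Hn; split; [apply DQ|lra]; auto)).
 assert (M2 := mono_lemma (fun x => - Q x) (fun _ => 0) E (-s) s ltac:(lra) ltac:(intros; cont; auto)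
   ltac:(intros x Hx Hn; split; [|lra]; replace 0 with (- 0) by ring; apply (derivable_pt_lim_opp Q); apply DQ; auto)).
 cbv beta in M2.
 assert (Q0 : Q (-s) = 0).
 { unfold Q, e1, e2. replace (c * (- s + s)) with 0 by ring. rewrite cos_0, sin_0. unfold A, B. ring. }
 assert (Qs : Q s = 0) by lra.
 unfold Q in Qs. assert (0 <= e1 s ^ 2) by apply pow2_ge_0. assert (0 <= e2 s ^ 2) by apply pow2_ge_0.
 assert (Z1 : e1 s = 0) by nra. assert (Z2 : e2 s = 0) by nra.
 unfold e1, e2 in Z1, Z2. replace (c * (s + s)) with th in Z1, Z2 by (unfold c; field; lra).
 split; lra.
Qed.

Lemma Phi_vals n s p w j : (j < 4 * n)%nat ->
  Phi n s p w j = p (-s) j /\ Phi n s p w (j + 4 * n) = w (-s) j /\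
  Phi n s p w (j + 8 * n) = p s j /\ Phi n s p w (j + 12 * n) = w s j.
Proof. intros Hj. unfold Phi. repeat split.
 - destruct (Nat.ltb_spec j (4 * n)); [auto|lia].
 - destruct (Nat.ltb_spec (j + 4 * n) (4 * n)); [lia|]. destruct (Nat.ltb_spec (j + 4 * n) (8 * n)); [|lia].
   f_equal; lia.
 - destruct (Nat.ltb_spec (j + 8 * n) (4 * n)); [lia|]. destruct (Nat.ltb_spec (j + 8 * n) (8 * n)); [lia|].
   destruct (Nat.ltb_spec (j + 8 * n) (12 * n)); [|lia]. f_equal; lia.
 - destruct (Nat.ltb_spec (j + 12 * n) (4 * n)); [lia|]. destruct (Nat.ltb_spec (j + 12 * n) (8 * n)); [lia|].
   destruct (Nat.ltb_spec (j + 12 * n) (12 * n)); [lia|]. f_equal; lia.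
Qed.

Lemma cross_false n L V N th s lam :
  is_Vsupnorm n L V N -> 0 < s <= L ->
  (N < lam \/ (0 < th < 2 * PI /\ N - lam < (thp th / (2 * s)) ^ 2 / 2)) ->
  ~ is_crossing n V L th s lam.
Proof. intros HN Hs Hcase [p [w [[[Cp [Ep HEp]] [Cw [Ew HEw]]] [[X1 X2] [k0 [Hk0 Hnz]]]]]].
 assert (HL : -L <= L) by lra.
 set (pc := fun t k => p (clamp (-L) L t) k). set (wc := fun t k => w (clamp (-L) L t) k).
 assert (Hpc : forall x, -L <= x <= L -> pc x = p x) by (intros x Hx; unfold pc; rewrite clamp_id; auto).
 assert (Hwc : forall x, -L <= x <= L -> wc x = w x) by (intros x Hx; unfold wc; rewrite clamp_id; auto).
 assert (CPc : forall k x, (k < 4 * n)%nat -> continuity_pt (fun t => pc t k) x).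
 { intros k x Hk. unfold pc. apply (cont_clamp (fun t => p t k)); auto. apply Cp; auto. }
 assert (CWc : forall k x, (k < 4 * n)%nat -> continuity_pt (fun t => wc t k) x).
 { intros k x Hk. unfold wc. apply (cont_clamp (fun t => w t k)); auto. apply Cw; auto. }
 assert (Wrot : forall m, (m < 2 * n)%nat ->
   w s (2 * m)%nat = cos th * w (-s) (2 * m)%nat - sin th * w (-s) (2 * m + 1)%nat /\
   w s (2 * m + 1)%nat = sin th * w (-s) (2 * m)%nat + cos th * w (-s) (2 * m + 1)%nat).
 { intros m Hm. assert (R := rot_ode (fun t => wc t (2 * m)%nat) (fun t => wc t (2 * m + 1)%nat) Ew s th ltac:(lra)
     ltac:(intros; apply CWc; lia) ltac:(intros; apply CWc; lia)).
   cbv beta in R. rewrite !Hwc in R by lra. apply R.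
   intros x Hx Hn. rewrite Hwc by lra. split.
   - apply (deriv_clamp (fun t => w t (2 * m)%nat)). lra.
     replace (- (th / (2 * s)) * w x (2 * m + 1)%nat) with (B_apply s th (w x) (2 * m)).
     apply HEw; auto; try lra; lia.
     unfold B_apply. rewrite Nat.even_even. f_equal. f_equal. lia.
   - apply (deriv_clamp (fun t => w t (2 * m + 1)%nat)). lra.
     replace (th / (2 * s) * w x (2 * m)%nat) with (B_apply s th (w x) (2 * m + 1)).
     apply HEw; auto; try lra; lia.
     unfold B_apply. rewrite Nat.even_odd. f_equal. f_equal. lia. }
 assert (Hpw : forall j, (j < 4 * n)%nat -> w (-s) j = p (-s) j /\ w s j = p s j).
 { intros j Hj. destruct (Nat.lt_ge_cases j (2 * n)) as [Hj2|Hj2].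
   - destruct (X1 j Hj2) as [A1 _]. destruct (X2 j Hj2) as [A2 _].
     destruct (Phi_vals n s p w j Hj) as [F1 [F2 [F3 F4]]].
     replace (j + 4 * n + 8 * n)%nat with (j + 12 * n)%nat in A2 by lia.
     rewrite F1, F2 in A1. rewrite F3, F4 in A2. split; auto.
   - destruct (X1 (j - 2 * n)%nat ltac:(lia)) as [_ A1]. destruct (X2 (j - 2 * n)%nat ltac:(lia)) as [_ A2].
     destruct (Phi_vals n s p w j Hj) as [F1 [F2 [F3 F4]]].
     replace (j - 2 * n + 2 * n)%nat with j in A1 by lia.
     replace (j - 2 * n + 6 * n)%nat with (j + 4 * n)%nat in A1 by lia.
     replace (j - 2 * n + 2 * n + 8 * n)%nat with (j + 8 * n)%nat in A2 by lia.
     replace (j - 2 * n + 6 * n + 8 * n)%nat with (j + 12 * n)%nat in A2 by lia.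
     rewrite F1, F2 in A1. rewrite F3, F4 in A2. split; auto. }
 assert (Z := core n L V N pc (fun t k => pc t (k + 2 * n)%nat) Ep s lam th HN Hs).
 assert (P1 : forall k x, (k < 2 * n)%nat -> continuity_pt (fun t => pc t k) x /\ continuity_pt (fun t => pc t (k + 2 * n)%nat) x).
 { intros; split; apply CPc; lia. }
 assert (P2 : forall x, -s < x < s -> ~ In x Ep -> forall k, (k < 2 * n)%nat ->
     derivable_pt_lim (fun t => pc t k) x (pc x (k + 2 * n)%nat) /\
     derivable_pt_lim (fun t => pc t (k + 2 * n)%nat) x (lam * pc x k - VI2 n V x (pc x) k)).
 { intros x Hx Hn k Hk. rewrite Hpc by lra. split.
   - apply (deriv_clamp (fun t => p t k)). lra.
     replace (p x (k + 2 * n)%nat) with (A_apply n V lam x (p x) k).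
     apply HEp; auto; try lra; lia.
     unfold A_apply. destruct (Nat.ltb_spec k (2 * n)); [auto|lia].
   - apply (deriv_clamp (fun t => p t (k + 2 * n)%nat)). lra.
     replace (lam * p x k - VI2 n V x (p x) k) with (A_apply n V lam x (p x) (k + 2 * n)).
     apply HEp; auto; try lra; lia.
     unfold A_apply. destruct (Nat.ltb_spec (k + 2 * n) (2 * n)); [lia|].
     replace (k + 2 * n - 2 * n)%nat with k by lia. auto. }
 assert (P3 : rot_bc n th (pc (- s)) (pc s)).
 { rewrite !Hpc by lra. intros i Hi. destruct (Wrot i ltac:(lia)) as [R1 R2].
   destruct (Hpw (2 * i)%nat ltac:(lia)) as [Q1 Q2]. destruct (Hpw (2 * i + 1)%nat ltac:(lia)) as [Q3 Q4].
   rewrite <- Q1, <- Q2, <- Q3, <- Q4. auto. }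
 assert (P4 : rot_bc n th ((fun t k => pc t (k + 2 * n)%nat) (- s)) ((fun t k => pc t (k + 2 * n)%nat) s)).
 { cbv beta. rewrite !Hpc by lra. intros i Hi. destruct (Wrot (i + n)%nat ltac:(lia)) as [R1 R2].
   replace (2 * (i + n))%nat with (2 * i + 2 * n)%nat in R1, R2 by lia.
   replace (2 * i + 2 * n + 1)%nat with (2 * i + 1 + 2 * n)%nat in R1, R2 by lia.
   destruct (Hpw (2 * i + 2 * n)%nat ltac:(lia)) as [Q1 Q2]. destruct (Hpw (2 * i + 1 + 2 * n)%nat ltac:(lia)) as [Q3 Q4].
   rewrite <- Q1, <- Q2, <- Q3, <- Q4. auto. }
 assert (Hz : forall j, (j < 4 * n)%nat -> p (-s) j = 0 /\ p s j = 0).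
 { intros j Hj. assert (Hm : -s <= -s <= s) by lra. assert (Hp' : -s <= s <= s) by lra.
   destruct (Nat.lt_ge_cases j (2 * n)) as [Hj2|Hj2].
   - destruct (Z P1 P2 P3 P4 Hcase (-s) j Hm Hj2) as [A _]. destruct (Z P1 P2 P3 P4 Hcase s j Hp' Hj2) as [B _].
     rewrite Hpc in A, B by lra. auto.
   - destruct (Z P1 P2 P3 P4 Hcase (-s) (j - 2 * n)%nat Hm ltac:(lia)) as [_ A].
     destruct (Z P1 P2 P3 P4 Hcase s (j - 2 * n)%nat Hp' ltac:(lia)) as [_ B].
     cbv beta in A, B. rewrite Hpc in A, B by lra. replace (j - 2 * n + 2 * n)%nat with j in A, B by lia. auto. }
 apply Hnz.
 destruct (Nat.lt_ge_cases k0 (4 * n)) as [H1|H1].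
 - destruct (Phi_vals n s p w k0 H1) as [F _]. rewrite F. apply Hz; auto.
 - destruct (Nat.lt_ge_cases k0 (8 * n)) as [H2|H2].
   + destruct (Phi_vals n s p w (k0 - 4 * n) ltac:(lia)) as [_ [F _]].
     replace (k0 - 4 * n + 4 * n)%nat with k0 in F by lia. rewrite F.
     destruct (Hpw (k0 - 4 * n)%nat ltac:(lia)) as [Q _]. rewrite Q. apply Hz; lia.
   + destruct (Nat.lt_ge_cases k0 (12 * n)) as [H3|H3].
     * destruct (Phi_vals n s p w (k0 - 8 * n) ltac:(lia)) as [_ [_ [F _]]].
       replace (k0 - 8 * n + 8 * n)%nat with k0 in F by lia. rewrite F. apply Hz; lia.
     * destruct (Phi_vals n s p w (k0 - 12 * n) ltac:(lia)) as [_ [_ [_ F]]].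
       replace (k0 - 12 * n + 12 * n)%nat with k0 in F by lia. rewrite F.
       destruct (Hpw (k0 - 12 * n)%nat ltac:(lia)) as [_ Q]. rewrite Q. apply Hz; lia.
Qed.

Theorem lemma3p12
  (n : nat) (L : R) (V : nat -> nat -> R -> R) (N : R)
  (Hn : (1 <= n)%nat) (HL : 0 < L)
  (Hsym : forall i j x, (i < n)%nat -> (j < n)%nat -> V i j x = V j i x)
  (Hper : forall i j x, (i < n)%nat -> (j < n)%nat -> V i j (x + 2 * L) = V i j x)
  (Hpc : forall i j, (i < n)%nat -> (j < n)%nat -> piecewise_continuous (V i j))
  (HN : is_Vsupnorm n L V N) :
  (* (i) *)
  (forall theta lam_inf : R, 0 <= theta <= 2 * PI -> N < lam_inf ->
     (forall s, 0 < s <= L -> ~ is_eigenvalue n V theta s lam_inf) /\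
     (forall s0, 0 < s0 < L ->
        forall s, s0 <= s <= L -> ~ is_crossing n V L theta s lam_inf)) /\
  (* (ii) *)
  (forall theta lam_inf s0 : R, 0 < theta < 2 * PI -> N < lam_inf ->
     0 < s0 -> s0 < L ->
     s0 < / 2 * Rmin theta (2 * PI - theta) / sqrt (N + lam_inf) ->
     (forall lam, 0 <= lam <= lam_inf -> ~ is_eigenvalue n V theta s0 lam) /\
     (forall lam, 0 <= lam <= lam_inf -> ~ is_crossing n V L theta s0 lam)).
Proof.
 assert (HN0 : 0 <= N) by (apply (Vsup_nonneg n L V N HN); lra).
 split.
 - intros th li Hth Hli. split.
   + intros s Hs. apply (eigen_false n L V N); auto.
   + intros s0 Hs0 s Hs. apply (cross_false n L V N); auto; lra.
 - intros th li s0 Hth Hli Hs0 Hs0L Hsm.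
   assert (Hcase : forall lam, 0 <= lam <= li -> N < lam \/ (0 < th < 2 * PI /\ N - lam < (thp th / (2 * s0)) ^ 2 / 2)).
   { intros lam Hlam. right. split; auto.
     set (K := N + li) in *. assert (HK : 0 < K) by (unfold K; lra).
     assert (HsK : 0 < sqrt K) by (apply sqrt_lt_R0; auto).
     assert (Htp : 0 < thp th) by (unfold thp; apply Rmin_glb_lt; lra).
     assert (H1 : s0 * sqrt K < / 2 * thp th).
     { apply (Rmult_lt_compat_r (sqrt K)) in Hsm; auto. unfold thp. unfold Rdiv in Hsm.
       rewrite Rmult_assoc, Rinv_l in Hsm by lra. lra. }
     assert (H2 : sqrt K < thp th / (2 * s0)).
     { apply (Rmult_lt_reg_r s0); auto. unfold Rdiv. replace (thp th * / (2 * s0) * s0) with (/ 2 * thp th) by (field; lra). lra. }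
     assert (H3 : K < (thp th / (2 * s0)) ^ 2).
     { rewrite <- (sqrt_sqrt K) by lra. simpl. rewrite Rmult_1_r. apply Rmult_le_0_lt_compat; lra. }
     unfold K in H3. lra. }
   split.
   + intros lam Hlam. apply (eigen_false n L V N); auto. lra.
   + intros lam Hlam. apply (cross_false n L V N); auto. lra.
Qed.
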